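(* Let $\alpha\ge\omega^\omega$ be a multiplicatively indecomposable ordinal. Then $\sup_{\alpha'<\alpha}\mathbf{w}(P_{\alpha'})\ge\alpha$.
   Context: For an ordinal $\alpha$, $P_\alpha=\{(\beta_0,\beta_1):\beta_0\le\beta_1<\alpha\}$ ordered componentwise ($(\beta_0,\beta_1)\le(\gamma_0,\gamma_1)$ iff $\beta_0\le\gamma_0$ and $\beta_1\le\gamma_1$); it is a wqo. $\mathbf{w}(A)$ (width) is the rank of the root of the well-founded tree of finite sequences of pairwise incomparable elements of $A$ (root: empty sequence, children: one-element extensions; rank $r(s)=\sup\{r(t)+1: t\text{ child of } s\}$). Multiplicatively indecomposable ordinals $\ge\omega$ are those of the form $\omega^{\omega^\gamma}$. *)

(* Defs.v *)
(* Ordinals are represented by well-ordered types: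
   an ordinal alpha is the order type of (A, lt); an ordinal beta < alpha is
   the order type of the initial segment {x | lt x b} for some b : A. *)
From Stdlib Require Import List Arith.
Import ListNotations.
Set Implicit Arguments.

Section Ord.
Variables (A : Type) (lt : A -> A -> Prop).

Definition le (x y : A) : Prop := lt x y \/ x = y.

Definition is_wellorder : Prop :=
  (forall x, ~ lt x x) /\
  (forall x y z, lt x y -> lt y z -> lt x z) /\
  (forall x y, lt x y \/ x = y \/ lt y x) /\
  well_founded lt.

(* Multiplicative indecomposability of alpha = ot(A):
   for all beta = ot{x < b}, gamma = ot{y < c}, the ordinal product
   beta * gamma (= gamma copies of beta, i.e. pairs (y,x) ordered
   lexicographically with y most significant) is < alpha, i.e. it embeds
   strictly increasingly into some proper initial segment {z < a}. *)
Definition mult_indecomposable : Prop :=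
  forall b c : A, exists (a : A) (f : A * A -> A),
    (forall y x, lt y c -> lt x b -> lt (f (y, x)) a) /\
    (forall y x y' x', lt y c -> lt x b -> lt y' c -> lt x' b ->
        (lt y y' \/ (y = y' /\ lt x x')) -> lt (f (y, x)) (f (y', x'))).

End Ord.

(* strict lexicographic order on lists of nat of equal length;
   (nat^n, lexlt) has order type omega^n *)
Inductive lexlt : list nat -> list nat -> Prop :=
| lexlt_head x y l l' : x < y -> length l = length l' -> lexlt (x :: l) (y :: l')
| lexlt_tail x l l' : lexlt l l' -> lexlt (x :: l) (x :: l').

(* omega^n <= ot(A,lt) : strictly increasing map from omega^n into A *)
Definition omega_pow_le (A : Type) (lt : A -> A -> Prop) (n : nat) : Prop :=
  exists f : list nat -> A, forall u v, length u = n -> length v = n ->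
    lexlt u v -> lt (f u) (f v).

(* omega^omega = sup_n omega^n <= ot(A,lt) *)
Definition omega_omega_le (A : Type) (lt : A -> A -> Prop) : Prop :=
  forall n, omega_pow_le lt n.

(* Rank in a tree given by a child relation:
   rank_ge ch lt s b  <->  r(s) >= ot{x | lt x b},
   where r(s) = sup { r(t) + 1 : ch s t }. *)
Inductive rank_ge (X A : Type) (ch : X -> X -> Prop) (lt : A -> A -> Prop)
    (s : X) (b : A) : Prop :=
| rank_ge_intro :
    (forall b', lt b' b -> exists t, ch s t /\ rank_ge ch lt t b') ->
    rank_ge ch lt s b.

Section Width.
Variables (A : Type) (lt : A -> A -> Prop).

Definition P_elem (a : A) (p : A * A) : Prop :=
  le lt (fst p) (snd p) /\ lt (snd p) a.

Definition P_le (p q : A * A) : Prop :=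
  le lt (fst p) (fst q) /\ le lt (snd p) (snd q).

Definition incomparable (p q : A * A) : Prop := ~ P_le p q /\ ~ P_le q p.

Definition antichain_seq (a : A) (s : list (A * A)) : Prop :=
  Forall (P_elem a) s /\ ForallOrdPairs incomparable s.

Definition width_child (a : A) (s t : list (A * A)) : Prop :=
  exists p, t = s ++ [p] /\ antichain_seq a t.

(* w(P_a) > ot{x | lt x b}  (rank of the root [] exceeds ot{x < b}) *)
Definition width_gt (a b : A) : Prop :=
  exists t, width_child a [] t /\ rank_ge (width_child a) lt t b.

End Width.

(* Main.v *)
Require Import Defs.
From Stdlib Require Import List Arith.
Import ListNotations.

Lemma FOP_app_single {T} (R : T -> T -> Prop) l p :
  ForallOrdPairs R l -> Forall (fun q => R q p) l -> ForallOrdPairs R (l ++ [p]).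
Proof.
  induction l as [|q l IH]; intros H1 H2; simpl.
  - constructor; [constructor|constructor].
  - inversion H1; subst. inversion H2; subst. constructor.
    + apply Forall_app; split; auto.
    + apply IH; auto.
Qed.

Lemma key (A : Type) (lt : A -> A -> Prop)
  (Hirr : forall x, ~ lt x x)
  (Htr : forall x y z, lt x y -> lt y z -> lt x z)
  (Hwf : well_founded lt)
  (a : A) (e : nat -> A) (g : A -> A)
  (He : forall k, lt (e k) (e (S k))) (Hea : forall k, lt (e k) a) :
  forall b t x k, antichain_seq lt a t ->
    Forall (fun p => le lt x (fst p) /\ le lt (snd p) (e k)) t ->
    le lt x (e k) ->
    (forall z, lt z b -> lt (g z) x) ->
    (forall z z', lt z z' -> lt z' b -> lt (g z) (g z')) ->
    rank_ge (width_child lt a) lt t b.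
Proof.
  assert (LeLt : forall x y z, le lt x y -> lt y z -> lt x z)
    by (intros x y z [H|H] H'; [eauto| subst; auto]).
  assert (LtLe : forall x y z, lt x y -> le lt y z -> lt x z)
    by (intros x y z H [H'|H']; [eauto| subst; auto]).
  intro b. induction b as [b IH] using (well_founded_ind Hwf).
  intros t x k Hac Hall Hxk Hg1 Hg2.
  constructor. intros b' Hb'.
  assert (Hx' : lt (g b') x) by auto.
  assert (Hnew : antichain_seq lt a (t ++ [(g b', e (S k))])).
  { destruct Hac as [Hel Hfop]. split.
    + apply Forall_app; split; auto. constructor; [|constructor].
      split; simpl; [left|apply Hea].
      apply (LtLe _ _ _ Hx'). left. eapply LeLt; eauto.
    + apply FOP_app_single; auto.
      eapply Forall_impl; [|exact Hall].
      intros [p1 p2] [Hp1 Hp2]; simpl in *. split.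
      * intros [Hl _]; simpl in *. apply (Hirr x).
        eapply LeLt; [exact Hp1|]. eapply LeLt; [exact Hl|exact Hx'].
      * intros [_ Hl]; simpl in *. apply (Hirr (e (S k))).
        eapply LeLt; [exact Hl|]. eapply LeLt; [exact Hp2|apply He]. }
  exists (t ++ [(g b', e (S k))]). split.
  - exists (g b', e (S k)). split; [reflexivity|exact Hnew].
  - apply (IH b' Hb' _ (g b') (S k)).
    + exact Hnew.
    + apply Forall_app; split.
      * eapply Forall_impl; [|exact Hall].
        intros [p1 p2] [Hp1 Hp2]; simpl in *. split; left.
        -- eapply LtLe; eauto.
        -- eapply LeLt; [exact Hp2|apply He].
      * constructor; [|constructor]. split; right; reflexivity.
    + left. apply (LtLe _ _ _ Hx'). left. eapply LeLt; eauto.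
    + intros z Hz. apply Hg2; auto.
    + intros z z' H1 H2. apply Hg2; eauto.
Qed.

From Stdlib Require Import Classical.

Theorem mainTheorem16 (A : Type) (lt : A -> A -> Prop)
  (Hwo : is_wellorder lt)
  (Hind : mult_indecomposable lt)
  (Hbig : omega_omega_le lt) :
  forall b : A, exists a : A, width_gt lt a b.
Proof.
  destruct Hwo as [Hirr [Htr [_ Hwf]]].
  intro b.
  destruct (classic (exists w0, lt w0 b)) as [[w0 Hw0]|Hno].
  - destruct (Hbig 2) as [h Hh].
    assert (H0 : forall n m, n < m -> lt (h [0; n]) (h [0; m])).
    { intros n m Hnm. apply Hh; try reflexivity.
      apply lexlt_tail. apply lexlt_head; auto. }
    assert (Hc : forall n, lt (h [0; n]) (h [1; 1])).
    { intros n. apply Hh; try reflexivity. apply lexlt_head; auto. }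
    destruct (Hind b (h [1; 1])) as [a [f [Hf1 Hf2]]].
    set (e := fun k => f (h [0; S k], w0)).
    set (g := fun z => f (h [0; 0], z)).
    exists a.
    assert (He : forall k, lt (e k) (e (S k))).
    { intro k. unfold e. apply Hf2; auto. }
    assert (Hea : forall k, lt (e k) a).
    { intro k. unfold e. apply Hf1; auto. }
    exists [(e 0, e 0)]. split.
    + exists (e 0, e 0). split; [reflexivity|].
      split.
      * constructor; [|constructor]. split; [right; reflexivity|apply Hea].
      * constructor; constructor.
    + apply (key A lt Hirr Htr Hwf a e g He Hea b [(e 0, e 0)] (e 0) 0).
      * split.
        -- constructor; [|constructor]. split; [right; reflexivity|apply Hea].
        -- constructor; constructor.
      * constructor; [|constructor]. split; right; reflexivity.
      * right; reflexivity.
      * intros z Hz. unfold g, e. apply Hf2; auto.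
      * intros z z' H1 H2. unfold g. apply Hf2; eauto.
  - destruct (Hbig 1) as [h Hh].
    assert (H01 : lt (h [0]) (h [1])).
    { apply Hh; try reflexivity. apply lexlt_head; auto. }
    exists (h [1]). exists [(h [0], h [0])]. split.
    + exists (h [0], h [0]). split; [reflexivity|].
      split.
      * constructor; [|constructor]. split; [right; reflexivity|exact H01].
      * constructor; constructor.
    + constructor. intros b' Hb'. exfalso. apply Hno. eauto.
Qed.
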